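(* Let $(t_i)_{i\in\mathbb{N}}$ be a sequence of real numbers that are algebraically independent over $\mathbb{Q}$, and let $A=\{P_{i,j} : i,j\in\mathbb{N},\ i<j\}\subseteq\mathbb{R}^2$, where $P_{i,j} = (t_i + t_j,\ t_i^2 + t_it_j + t_j^2)$. Then for no positive integer $m$ can $A$ be partitioned as $A=A_1\cup\cdots\cup A_m$ with each $A_r$ containing no three collinear points. *)

(* Defs.v *)
From HB Require Import structures.
From mathcomp Require Import all_boot all_order all_algebra.
From mathcomp Require Import reals.
From mathcomp Require Import mpoly.
Set Implicit Arguments. Unset Strict Implicit. Unset Printing Implicit Defensive.
Import Order.TTheory GRing.Theory Num.Theory.
Local Open Scope ring_scope.

(* Every finite subfamily lies in a prefix t_0, ..., t_{n-1}, so it suffices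
   (and is equivalent) to quantify over polynomials in the first n variables. *)
Definition alg_indep_Q (R : realType) (t : nat -> R) : Prop :=
  forall (n : nat) (p : {mpoly rat[n]}),
    p != 0 -> (map_mpoly (ratr : rat -> R) p).@[fun i : 'I_n => t (nat_of_ord i)] != 0.

Definition Pt (R : realType) (t : nat -> R) (i j : nat) : R * R :=
  (t i + t j, t i ^+ 2 + t i * t j + t j ^+ 2).

Definition inA (R : realType) (t : nat -> R) (x : R * R) : Prop :=
  exists i j : nat, (i < j)%N /\ x = Pt t i j.

Definition collinear (R : realType) (p q r : R * R) : Prop :=
  (q.1 - p.1) * (r.2 - p.2) - (q.2 - p.2) * (r.1 - p.1) = 0.

Definition no_three_collinear (R : realType) (S : R * R -> Prop) : Prop :=
  forall p q r, S p -> S q -> S r -> p <> q -> p <> r -> q <> r ->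
    ~ collinear p q r.

(* Main.v *)
Require Import Defs.
From HB Require Import structures.
From mathcomp Require Import all_boot all_order all_algebra.
From mathcomp Require Import reals.
From mathcomp Require Import mpoly.
From mathcomp Require Import ring zify.
From Stdlib Require Import ClassicalEpsilon.
Import Order.TTheory GRing.Theory Num.Theory.
Local Open Scope ring_scope.

Fixpoint fR (k : nat) : nat := if k is k'.+1 then (k'.+1 * (fR k' - 1) + 2)%N else 2%N.

Lemma count_le_sum (g : nat -> nat) (C s : seq nat) :
  (count (fun w => g w \in C) s <= \sum_(c <- C) count (fun w => g w == c) s)%N.
Proof.
elim: C => [|c C IH]; first by rewrite big_nil count_pred0.
rewrite big_cons.
have -> : count (fun w => g w \in c :: C) s =
          count (predU (fun w => g w == c) (fun w => g w \in C)) s.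
  by apply: eq_count => w; rewrite /= in_cons.
have := count_predUI (fun w => g w == c) (fun w => g w \in C) s.
move=> H; apply: (leq_trans _ (leq_add (leqnn _) IH)); rewrite -H; exact: leq_addr.
Qed.

Lemma ramsey k : forall (e : nat -> nat -> nat) (C S : seq nat), uniq C -> (size C <= k)%N ->
  uniq S -> (forall x y, x \in S -> y \in S -> x != y -> e x y \in C) -> (fR k <= size S)%N ->
  exists x y z, x \in S /\ y \in S /\ z \in S /\ x != y /\ x != z /\ y != z /\
    e x y = e x z /\ e x z = e y z.
Proof.
elim: k => [|k IH] e C S uC sC uS HC sS.
  have C0 : C = [::] by case: C uC sC HC.
  case: S uS HC sS => [|a [|b S]] // uS HC _; move: uS => /= /andP[aS _].
  have ab : a != b by apply/eqP => E; move: aS; rewrite E inE eqxx.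
  by have := HC a b; rewrite C0 in_nil !inE !eqxx orbT => /(_ isT isT ab).
case: S uS HC sS => [_ _|v S' uS HC sS]; first by rewrite /= addn2.
move: uS => /= /andP[vS' uS'].
have sS' : ((k.+1 * (fR k - 1)).+1 <= size S')%N by move: sS; rewrite /= addn2.
have [c cC cnt] : exists2 c, c \in C & (fR k <= count (fun w => e v w == c) S')%N.
  case Hh: (has (fun c => fR k <= count (fun w => e v w == c) S')%N C).
    by case/hasP: Hh => c ? ?; exists c.
  exfalso; move/negbT/hasPn: Hh => Hh.
  have H1 : count (fun w => e v w \in C) S' = size S'.
    apply/eqP; rewrite -all_count; apply/allP => w wS; apply: HC; rewrite ?inE ?eqxx ?wS ?orbT //.
    by apply/eqP => E; rewrite E wS in vS'.
  have H2 := count_le_sum (e v) C S'.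
  have H3 : (\sum_(c <- C) count (fun w => e v w == c) S' <= \sum_(c <- C) (fR k - 1))%N.
    rewrite big_seq [X in (_ <= X)%N]big_seq; apply: leq_sum => c cC.
    have := Hh c cC; rewrite -ltnNge; lia.
  rewrite big_const_seq count_predT iter_addn_0 mulnC in H3.
  have H4 : (size C * (fR k - 1) <= k.+1 * (fR k - 1))%N by rewrite leq_mul2r sC orbT.
  lia.
set T := filter (fun w => e v w == c) S'.
have uT : uniq T by rewrite filter_uniq.
have szT : (fR k <= size T)%N by rewrite size_filter.
case Hh: (has (fun x => has (fun y => (x != y) && (e x y == c)) T) T).
  case/hasP: Hh => x xT /hasP[y yT /andP[xy /eqP exy]].
  move: xT yT; rewrite !mem_filter => /andP[/eqP evx xS] /andP[/eqP evy yS].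
  exists v, x, y; rewrite !inE eqxx xS yS !orbT; do 3 split => //.
  split; first by apply/eqP => E; rewrite E xS in vS'.
  split; first by apply/eqP => E; rewrite E yS in vS'.
  by rewrite evx evy exy.
move/negbT/hasPn: Hh => Hh.
have [x [y [z [xT [yT [zT H]]]]]] : exists x y z, x \in T /\ y \in T /\ z \in T /\ x != y /\ x != z /\ y != z /\
    e x y = e x z /\ e x z = e y z.
  apply: (IH e (rem c C) T) => //; first exact: rem_uniq.
    rewrite size_rem // -subn1; move: sC; rewrite leq_subLR add1n; exact.
  move=> a b aT bT ab; rewrite mem_rem_uniq // inE; apply/andP; split.
    by have := Hh a aT => /hasPn /(_ b bT); rewrite ab.
  move: aT bT; rewrite !mem_filter => /andP[_ aS] /andP[_ bS].
  by apply: HC; rewrite ?inE ?aS ?bS ?orbT.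
move: xT yT zT; rewrite !mem_filter => /andP[_ xS] /andP[_ yS] /andP[_ zS].
by exists x, y, z; rewrite !inE xS yS zS !orbT.
Qed.

Lemma Pt_sym (R : realType) (t : nat -> R) i j : Pt t i j = Pt t j i.
Proof. by rewrite /Pt; congr pair; ring. Qed.

Lemma t_inj (R : realType) (t : nat -> R) (ht : alg_indep_Q t) i j : i != j -> t i != t j.
Proof.
move=> ij; pose n := (maxn i j).+1.
have hi : (i < n)%N by rewrite ltnS leq_maxl.
have hj : (j < n)%N by rewrite ltnS leq_maxr.
pose p : {mpoly rat[n]} := 'X_(Ordinal hi) - 'X_(Ordinal hj).
have p0 : p != 0.
  apply/eqP => /(congr1 (mcoeff U_(Ordinal hi))).
  rewrite mcoeffB !mcoeffXU mcoeff0 eqxx.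
  have -> : (Ordinal hj == Ordinal hi) = false by apply/negbTE; rewrite eq_sym.
  by move/eqP; rewrite subr0 oner_eq0.
have := ht n p p0.
by rewrite /p rmorphB /= !map_mpolyX mevalB !mevalXU /= subr_eq0.
Qed.

Theorem mainTheorem4 (R : realType) (t : nat -> R) (ht : alg_indep_Q t) :
  forall m : nat, (0 < m)%N ->
  ~ exists parts : 'I_m -> (R * R -> Prop),
      (forall x, inA t x <-> exists r : 'I_m, parts r x) /\
      (forall (r s : 'I_m) x, parts r x -> parts s x -> r = s) /\
      (forall r : 'I_m, no_three_collinear (parts r)).
Proof.
case=> // m' _ [parts [Hcov [Hdisj Hno]]].
pose pk (x : R * R) : 'I_m'.+1 := epsilon (inhabits ord0) (fun r => parts r x).
have HA u v : u != v -> inA t (Pt t u v).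
  move=> uv; case: (ltngtP u v) => [h|h|h]; last by rewrite h eqxx in uv.
    by exists u, v.
  by exists v, u; rewrite Pt_sym.
have Hpk u v : u != v -> parts (pk (Pt t u v)) (Pt t u v).
  by move=> uv; apply: (epsilon_spec (inhabits ord0) (fun r => parts r (Pt t u v))); apply/Hcov/HA.
pose e u v := val (pk (Pt t u v)).
have [x [y [z [_ [_ [_ [xy [xz [yz [e1 e2]]]]]]]]]] :=
  @ramsey m'.+1 e (iota 0 m'.+1) (iota 0 (fR m'.+1)) (iota_uniq _ _)
    ltac:(by rewrite size_iota) (iota_uniq _ _)
    (fun u v _ _ _ => ltac:(by rewrite mem_iota add0n /e ltn_ord)) ltac:(by rewrite size_iota).
have E1 : pk (Pt t x z) = pk (Pt t x y) by apply/val_inj; exact: (esym e1).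
have E2 : pk (Pt t y z) = pk (Pt t x y) by apply/val_inj; exact: (esym (etrans e1 e2)).
apply: (Hno (pk (Pt t x y)) (Pt t x y) (Pt t x z) (Pt t y z)).
- exact: Hpk.
- by rewrite -E1; apply: Hpk.
- by rewrite -E2; apply: Hpk.
- case=> h _; move: (@t_inj _ _ ht _ _ yz); rewrite (addrI _ h) eqxx //.
- case=> h _; move: (@t_inj _ _ ht _ _ xz); rewrite (addrI _ (etrans (addrC _ _) h)) eqxx //.
- case=> h _; move: (@t_inj _ _ ht _ _ xy); rewrite (addIr _ h) eqxx //.
- rewrite /collinear /Pt /=; ring.
Qed.
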